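(* Let $a,b$ be integers and let $G\in\mathscr{G}_{a,b}$ be a graph containing a cycle and having at least one pendant vertex. If $v_0v_1\ldots v_k$ is a longest pendant path in $G$, then $k=1$.
   Context: All graphs are simple and connected; $d_G(v)$ is the degree of $v$, $N_G(v)$ its neighbourhood. For integers $a,b$, $\mathscr{G}_{a,b}$ is the set of connected graphs $G$ such that for every $v\in V_G$, $\sum_{u\in N_G(v)}d_G(u)=a\,d_G(v)+b-d_G(v)^2$. A pendant vertex is a vertex of degree $1$; $PV(G)$ is the set of pendant vertices. The base $\widetilde{G}$ of $G$ is the subgraph obtained from $G$ by repeatedly deleting pendant vertices until none remain. If $G$ contains a cycle and $PV(G)\neq\emptyset$, a longest pendant path is a longest path $v_0v_1\ldots v_k$ with $v_0\in PV(G)$, $v_i\notin V_{\widetilde G}$ for $1\le i\le k-1$, and $v_k\in V_{\widetilde G}$. *)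

(* Defs.v *)
From mathcomp Require Import all_boot all_order all_algebra.
Set Implicit Arguments. Unset Strict Implicit. Unset Printing Implicit Defensive.
Import GRing.Theory Num.Theory.

Section Graphs.
Variable T : finType.
Variable e : rel T.

Definition simple_graph : Prop := irreflexive e /\ symmetric e.
Definition connected_graph : Prop := forall x y : T, connect e x y.

Definition nbhd (v : T) : {set T} := [set u | e v u].
Definition deg (v : T) : nat := #|nbhd v|.

Definition in_Gab (a b : int) : Prop :=
  forall v : T,
    ((\sum_(u in nbhd v) deg u)%:Z = a * (deg v)%:Z + b - (deg v)%:Z ^+ 2)%R.

Definition has_cycle : Prop :=
  exists s : seq T, [&& 3 <= size s, uniq s & cycle e s].

Definition pendant (v : T) : bool := deg v == 1.

Definition deg_in (S : {set T}) (v : T) : nat := #|[set u in S | e v u]|.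

Definition prune (S : {set T}) : {set T} := [set v in S | deg_in S v != 1].

(* vertex set of the base: pendant deletion iterated until stable
   (#|T| rounds suffice since each non-stable round deletes a vertex) *)
Definition base : {set T} := iter #|T| prune setT.

Definition pendant_path (s : seq T) : bool :=
  if s is v0 :: t then
    [&& path e v0 t, uniq s, pendant v0,
        last v0 t \in base &
        all (fun x => x \notin base) (drop 1 (belast v0 t))]
  else false.

End Graphs.

(* Main.v *)
Require Import Defs.
From mathcomp Require Import all_boot all_order all_algebra.
From mathcomp Require Import zify.
Set Implicit Arguments. Unset Strict Implicit. Unset Printing Implicit Defensive.

Section Aux.
Variable T : finType.
Variable e : rel T.
Hypothesis irr : irreflexive e.
Hypothesis sym : symmetric e.

Definition S i := iter i (prune e) setT.

Lemma prune_sub X : prune e X \subset X.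
Proof. by apply/subsetP=> v; rewrite inE => /andP[]. Qed.

Lemma S_mono i j : i <= j -> S j \subset S i.
Proof.
move=> /subnKC <-; elim: (j - i) => [|n IH]; first by rewrite addn0.
rewrite addnS; exact: subset_trans (prune_sub _) IH.
Qed.

Lemma base_S : base e = S #|T|.
Proof. by []. Qed.

Lemma S_stab_aux i : (#|S i| + i <= #|T|) \/ exists2 j, j < i & S j.+1 = S j.
Proof.
elim: i => [|i [IH|[j ji Hj]]]; last by right; exists j => //; exact: ltnW.
- by left; rewrite addn0 /S /= cardsT.
- case: (eqVneq (S i.+1) (S i)) => H; first by right; exists i.
  left. have : S i.+1 \proper S i.
    by rewrite properEneq H (prune_sub _).
  move/proper_card; lia.
Qed.

Lemma S_const j m : S j.+1 = S j -> S (j + m) = S j.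
Proof.
move=> H; elim: m => [|m IH]; first by rewrite addn0.
rewrite addnS; change (prune e (S (j+m)) = S j); rewrite IH; exact: H.
Qed.

Lemma base_stable : prune e (S #|T|) = S #|T|.
Proof.
case: (S_stab_aux #|T|) => [H|[j jN Hj]].
  have H0 : #|S #|T| | == 0 by apply/eqP; lia.
  move: H0; rewrite cards_eq0 => /eqP ->; apply/eqP; rewrite eqEsubset prune_sub sub0set //.
have E1 := S_const (#|T| - j) Hj. have E2 := S_const (#|T|.+1 - j) Hj.
rewrite subnKC in E1; last exact: ltnW.
rewrite subnKC in E2; last by lia.
by change (S #|T|.+1 = S #|T|); rewrite E2 E1.
Qed.

Lemma removal v n : v \notin S n -> exists2 i, i < n & (v \in S i) && (v \notin S i.+1).
Proof.
elim: n => [|n IH]; first by rewrite /S /= inE.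
move=> Hv; case: (boolP (v \in S n)) => H; first by exists n => //; rewrite H.
by have [i ilt Hi] := IH H; exists i => //; exact: ltnW.
Qed.

Lemma removed_deg (X : {set T}) v : v \in X -> v \notin prune e X -> deg_in e X v = 1.
Proof. by move=> vX; rewrite inE vX /= negbK => /eqP. Qed.


Lemma deg_in_ge2 (X : {set T}) y u1 u2 : u1 != u2 -> u1 \in X -> u2 \in X ->
  e y u1 -> e y u2 -> 1 < deg_in e X y.
Proof.
move=> ne h1 h2 e1 e2; rewrite /deg_in.
have : [set u1; u2] \subset [set u in X | e y u].
  by apply/subsetP=> u; rewrite !inE => /orP[]/eqP->; rewrite ?h1 ?h2 ?e1 ?e2.
by move/subset_leq_card; rewrite cards2 ne.
Qed.

Lemma deg_in_le (X : {set T}) v : deg_in e X v <= deg e v.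
Proof.
apply: subset_leq_card; apply/subsetP=> u; rewrite !inE => /andP[]; done.
Qed.

Lemma prop_path (X : {set T}) x p : path e x p -> uniq (x :: p) ->
  all (fun y => y \in X) (x :: p) -> x \in prune e X -> last x p \in prune e X ->
  all (fun y => y \in prune e X) (x :: p).
Proof.
elim: p x => [|y p IH] x /=; first by move=> _ _ _ ->.
move=> /andP[exy pyp] /andP[xn uyp] /and3P[xX yX aX] xP lP.
rewrite xP /=; apply: IH => //=; first by rewrite yX.
case: p pyp xn uyp aX lP => [|z p] /=; first by move=> _ _ _ _ ->.
move=> /andP[eyz _]; rewrite !inE !negb_or => /andP[xy /andP[xz _]] _ /andP[zX _] _.
rewrite yX /=; apply/negP => /eqP h.
have H : 1 < deg_in e X y by apply: (deg_in_ge2 xz xX zX) => //; rewrite sym.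
by rewrite h in H.
Qed.

Lemma descent i w : w \notin S i -> exists z, exists q,
  [/\ path e z q /\ last z q = w, uniq (z :: q), pendant e z,
      all (fun y => y \notin S i) (z :: q) & (deg e w != 1 -> 0 < size q)].
Proof.
elim: i w => [|i IH] w; first by rewrite /S /= inE.
move=> wS. case: (boolP (w \in S i)) => wSi; last first.
  have [z [q [[h1 h2] h3 h4 h5 h6]]] := IH w wSi.
  exists z, q; split => //; apply/allP => y /(allP h5) yn.
  by apply/negP => /(subsetP (prune_sub _)); apply/negP.
case: (eqVneq (deg e w) 1) => dw.
  exists w, [::]; split => //=; by rewrite ?andbT /pendant ?dw.
have d1 := removed_deg wSi wS.
have : ~~ (nbhd e w \subset [set u in S i | e w u]).
  apply/negP => /subset_leq_card; rewrite -/(deg e w) -/(deg_in e (S i) w) d1.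
  move=> H; move: dw; have : 1 <= deg e w by rewrite -d1 deg_in_le.
  lia.
case/subsetPn => y; rewrite !inE => ewy; rewrite ewy andbT => yS.
have [z [q [[h1 h2] h3 h4 h5 h6]]] := IH y yS.
exists z, (rcons q w); split.
- by rewrite rcons_path h1 h2 sym last_rcons.
- rewrite -rcons_cons rcons_uniq h3 andbT; apply/negP => /(allP h5); by rewrite wSi.
- exact: h4.
- rewrite -rcons_cons all_rcons wS; apply/allP => u /(allP h5) un.
  by apply/negP => /(subsetP (prune_sub _)); apply/negP.
- by rewrite size_rcons.
Qed.


Lemma deg_pos v x : e v x -> 0 < deg e x.
Proof. by move=> evx; apply/card_gt0P; exists v; rewrite inE sym. Qed.

Lemma leaf_unique x p y : deg e x = 1 -> e x p -> e x y -> y = p.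
Proof.
move=> dx hp hy.
have : #|nbhd e x| == 1 by apply/eqP.
move/cards1P => [w hw].
have : p \in nbhd e x by rewrite inE.
have : y \in nbhd e x by rewrite inE.
by rewrite hw !inE => /eqP -> /eqP ->.
Qed.

Lemma deg_in_one (X : {set T}) v w : deg e v = 1 -> e v w -> w \in X -> deg_in e X v = 1.
Proof.
move=> dv evw wX; apply/eqP; rewrite eqn_leq; apply/andP; split.
  by rewrite -dv deg_in_le.
by apply/card_gt0P; exists w; rewrite inE wX evw.
Qed.

Lemma pendant_notin_base v : deg e v = 1 -> v \in S #|T| -> False.
Proof.
move=> dv vS.
have [w] : exists w, e v w.
  have : #|nbhd e v| == 1 by apply/eqP.
  move/cards1P => [w hw]; exists w.
  have : w \in nbhd e v by rewrite hw inE.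
  by rewrite inE.
move=> evw.
case: (boolP (w \in S #|T|)) => wS.
  have := deg_in_one dv evw wS => hd.
  have : v \in prune e (S #|T|) by rewrite base_stable.
  by rewrite inE hd eqxx andbF.
have [i iN /andP[wi wi1]] := removal wS.
have vi : v \in S i by apply: (subsetP (S_mono (ltnW iN))).
have vi1 : v \in S i.+1 by apply: (subsetP (S_mono iN)).
move: vi1; rewrite /S /= -/(S i) inE vi /=.
have wSi := wi.
by rewrite (deg_in_one dv evw wSi) eqxx.
Qed.

Lemma propS x p i : path e x p -> uniq (x :: p) -> last x p \in S #|T| ->
  i <= #|T| -> x \in S i -> all (fun y => y \in S i) (x :: p).
Proof.
move=> pth un lS; elim: i => [|i IH] iN xi.
  by apply/allP => y _; rewrite /S /= inE.
have xi' : x \in S i by apply: (subsetP (S_mono (leqnSn i))).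
have al := IH (ltnW iN) xi'.
apply: (prop_path pth un al) => //.
exact: (subsetP (S_mono iN)).
Qed.

Lemma cycle_deg s x : cycle e s -> uniq s -> 3 <= size s -> x \in s -> 1 < deg e x.
Proof.
move=> cs us ss xs; case/splitPr: xs cs us ss => p1 p2 cs us ss.
move: us; rewrite -(rot_uniq (size p1) (p1 ++ x :: p2)) rot_size_cat => us.
rewrite -(rot_cycle (size p1)) rot_size_cat in cs.
have ss' : 2 <= size (p2 ++ p1) by move: ss; rewrite !size_cat /=; lia.
rewrite cat_cons in cs us.
case E : (p2 ++ p1) cs us ss' => [|y [|w r]] //=.
move=> /and3P[exy _]; rewrite rcons_path => /andP[_ ezx].
move=> /and4P[_ yn _ _] _.
set z := last w r in ezx.
have zin : z \in w :: r by rewrite /z mem_last.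
have yz : y != z by apply/negP => /eqP yz; move: zin; rewrite -yz (negbTE yn).
have : [set y; z] \subset nbhd e x.
  apply/subsetP => u; rewrite !inE => /orP[]/eqP ->; rewrite ?exy //.
  by rewrite sym.
by move/subset_leq_card; rewrite cards2 yz.
Qed.

Lemma sum_nbhd v w : w \in nbhd e v ->
  \sum_(u in nbhd e v) deg e u =
  deg e w + (deg e v - 1) + \sum_(u in nbhd e v | u != w) (deg e u - 1).
Proof.
move=> wv; rewrite (bigD1 w) //= -addnA; congr (_ + _).
rewrite (eq_bigr (fun u => (deg e u - 1) + 1)); last first.
  move=> u /andP[]; rewrite inE => /deg_pos h _; by rewrite subnK.
rewrite big_split /= addnC; congr (_ + _).
rewrite sum1dep_card /deg (cardD1 w (nbhd e v)) wv add1n subSS subn0.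
by apply: eq_card => u; rewrite !inE andbC.
Qed.

Lemma closure_connect (A : {set T}) x y : (forall u v, u \in A -> e u v -> v \in A) ->
  x \in A -> connect e x y -> y \in A.
Proof.
move=> cl xA /connectP [p pth ->]; elim: p x xA pth => [|z p IH] x xA //=.
by move=> /andP[exz pz]; apply: IH => //; exact: cl exz.
Qed.

End Aux.

Import GRing.Theory Num.Theory.

Local Open Scope ring_scope.
Lemma arith (a b : int) (c D X : nat) : (1 <= c)%N -> (1 <= D)%N -> c%:Z = (a + b - 1)%R ->
  (D + (c-1))%:Z = (a * c%:Z + b - c%:Z^+2)%R -> (c + (D-1) + X)%:Z = (a * D%:Z + b - D%:Z^+2)%R -> X = 0.
Proof.
move=> c1 D1 h1 h2 h3.
have ha : a = (c%:Z + 1 - b)%R by lia.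
subst a.
have hD : D%:Z = (1 - b * (c%:Z - 1))%R by rewrite GRing.expr2 in h2; nia.
have hX : X%:Z = (- ((c%:Z - 1) * (c%:Z - 2)) * (b * (b + 1)))%R.
  rewrite GRing.expr2 in h3; nia.
have p1 : (0 <= (c%:Z - 1) * (c%:Z - 2))%R by nia.
have p2 : (0 <= b * (b + 1))%R by nia.
nia.
Qed.

Local Close Scope ring_scope.
Theorem lemma1p7 (T : finType) (e : rel T) (a b : int) :
  simple_graph e -> connected_graph e -> in_Gab e a b ->
  has_cycle e -> (exists v : T, pendant e v) ->
  forall s : seq T,
    pendant_path e s ->
    (forall t : seq T, pendant_path e t -> size t <= size s) ->
    size s = 2.
Proof.
move=> [irr sym] conn gab [cs /and3P[cs3 csu csc]] _ s.
case: s => [|v0 [|v1 [|v2 r]]] // ps smax.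
  move: ps; rewrite /pendant_path /= => /andP[/eqP pv /andP[lb _]].
  by case: (pendant_notin_base pv lb).
move: ps => /and5P[pth un /eqP pv lb al].
rewrite /= in al lb.
rewrite base_S in al lb.
case/andP: al => v1B al.
have [i iN /andP[v1i v1i1]] := removal v1B.
have pth1 : path e v1 (v2 :: r) by case/andP: pth.
have ev0v1 : e v0 v1 by case/andP: pth.
have ev1v2 : e v1 v2 by case/and3P: pth.
have un1 : uniq [:: v1, v2 & r] by case/andP: un.
have allS := propS sym pth1 un1 lb (ltnW iN) v1i.
have d1 := removed_deg v1i v1i1.
have v2i : v2 \in S e i by case/and3P: allS.
have L1 : forall x, e v1 x -> x != v2 -> deg e x = 1.
  move=> x ev1x xv2.
  have xi : x \notin S e i.
    apply/negP => xi; have := deg_in_ge2 xv2 xi v2i ev1x ev1v2; by rewrite d1.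
  apply/eqP; apply/negP => /negP dx.
  have [z [q [[h1 h2] h3 h4 h5 h6]]] := descent sym xi.
  have sq := h6 dx.
  suff Hp : pendant_path e (z :: q ++ [:: v1, v2 & r]).
    move: (smax _ Hp); rewrite /= size_cat /= => H; clear -sq H; lia.
  apply/and5P; split.
  - by rewrite cat_path h1 h2 /= sym ev1x.
  - rewrite -cat_cons cat_uniq h3 un1 andbT; apply/hasPn => y /(allP allS) yi.
    by apply/negP => /(allP h5); rewrite yi.
  - exact: h4.
  - by rewrite last_cat h2 /= base_S.
  - apply/allP => y /mem_drop; rewrite belast_cat mem_cat h2 => /orP[H|H].
      move: H => /mem_belast /(allP h5) yn; rewrite base_S.
      by apply/negP => /(subsetP (S_mono e (ltnW iN))); apply/negP.
    move: H; rewrite /= !inE => /orP[/eqP ->|/orP[/eqP ->|H]].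
    + by rewrite base_S; apply/negP => /(subsetP (S_mono e (ltnW iN))); apply/negP.
    + by rewrite base_S.
    + by rewrite base_S; apply: (allP al).
have nb0 : nbhd e v0 = [set v1].
  have : #|nbhd e v0| == 1 by apply/eqP.
  move/cards1P => [w hw]; have : v1 \in nbhd e v0 by rewrite inE.
  by rewrite hw inE => /eqP ->.
have g0 := gab v0; rewrite nb0 big_set1 pv in g0.
have v2n : v2 \in nbhd e v1 by rewrite inE.
have v1n : v1 \in nbhd e v2 by rewrite inE sym.
have g1 := gab v1; rewrite (sum_nbhd sym v2n) big1 ?addn0 in g1; last first.
  by move=> u /andP[]; rewrite inE => ev1u uv2; rewrite L1.
have g2 := gab v2; rewrite (sum_nbhd sym v1n) in g2.
have c1 : 0 < deg e v1 := deg_pos sym ev0v1.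
have D1 : 0 < deg e v2 := deg_pos sym ev1v2.
rewrite GRing.mulr1 GRing.expr1n in g0.
have X0 := arith c1 D1 g0 g1 g2.
have L2 : forall x, e v2 x -> x != v1 -> deg e x = 1.
  move=> x ev2x xv1; move/eqP: X0; rewrite sum_nat_eq0 => /forallP /(_ x).
  rewrite inE ev2x xv1 /= => /eqP h.
  by apply/eqP; rewrite eqn_leq -subn_eq0 h (deg_pos sym ev2x).
exfalso.
pose A := [set v1; v2] :|: nbhd e v1 :|: nbhd e v2.
have leafP : forall w, w \in A -> w != v1 -> w != v2 -> deg e w = 1.
  move=> w; rewrite !inE => /orP[/orP[/orP[]|]|] h wv1 wv2.
  - by rewrite h in wv1.
  - by rewrite h in wv2.
  - exact: L1.
  - exact: L2.
have cl : forall u w, u \in A -> e u w -> w \in A.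
  move=> u w uA euw.
  case: (eqVneq u v1) => [?|uv1]; first by subst u; rewrite /A !inE euw !orbT.
  case: (eqVneq u v2) => [?|uv2]; first by subst u; rewrite /A !inE euw !orbT.
  have du := leafP u uA uv1 uv2.
  move: uA; rewrite !inE (negbTE uv1) (negbTE uv2) /= => /orP[] h.
  - by rewrite (leaf_unique du euw (_ : e u v1)) ?eqxx // sym.
  - by rewrite (leaf_unique du euw (_ : e u v2)) ?eqxx ?orbT // sym.
have allA : forall y, y \in A.
  move=> y; apply: (closure_connect cl _ (conn v2 y)); by rewrite !inE eqxx orbT.
have cd : forall x, x \in cs -> deg e x != 1.
  by move=> x xc; have := cycle_deg sym csc csu cs3 xc; case: (deg e x) => [|[]].
have nl : forall x, x \in cs -> (x == v1) || (x == v2).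
  move=> x xc; apply/negPn/negP; rewrite negb_or => /andP[h1 h2].
  by have := cd x xc; rewrite (leafP x (allA x) h1 h2).
case: cs cs3 csu csc cd nl => [|x1 [|x2 [|x3 cr]]] // _ csu _ _ nl.
have n1 := nl x1 (mem_head _ _).
have n2 : (x2 == v1) || (x2 == v2) by apply: nl; rewrite !inE eqxx orbT.
have n3 : (x3 == v1) || (x3 == v2) by apply: nl; rewrite !inE eqxx !orbT.
move: csu => /= /and3P[]; rewrite !inE !negb_or => /and3P[d12 d13 _] /andP[d23 _] _.
by case/orP: n1 => /eqP e1; case/orP: n2 => /eqP e2; case/orP: n3 => /eqP e3; rewrite ?e1 ?e2 ?e3 ?eqxx in d12 d13 d23.
Qed.
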